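(* Assume the continuum hypothesis, fix a well-ordering $\lessdot$ of $[0,1]$ of order type $\omega_1$, and let $\mathcal{X}=[0,1]$, $\mathcal{H}=\{x\mapsto\mathbf 1_{x\,\underline{\lessdot}\,z}:z\in[0,1]\}$ (where $x\,\underline{\lessdot}\,z$ means $x\lessdot z$ or $x=z$). Then the ordinal Littlestone dimension satisfies $\mathrm{LD}(\mathcal{H})\ge\omega_1$ (i.e. either $\mathrm{LD}(\mathcal{H})=\mathsf\Omega$ or $\mathrm{LD}(\mathcal{H})$ is an ordinal $\ge\omega_1$).
   Context: A (finite) Littlestone tree of depth $d<\infty$ for $\mathcal{H}$ is a collection $\{x_{\mathbf u}:0\le k<d,\ \mathbf u\in\{0,1\}^k\}\subseteq\mathcal{X}$ such that for every $\mathbf y\in\{0,1\}^d$ there is $h\in\mathcal{H}$ with $h(x_{\mathbf y_{\le k}})=y_{k+1}$ for $0\le k<d$, where $\mathbf y_{\le k}=(y_1,\ldots,y_k)$; the empty tree $\varnothing$ has depth $0$. An infinite Littlestone tree is the analogous collection with $d=\infty$ (every finite initial path realized by some $h\in\mathcal{H}$). For finite Littlestone trees write $\mathbf t'\prec\mathbf t$ if $\mathbf t$ is obtained from $\mathbf t'$ by removing its leaves (deepest level). If $\mathcal{H}$ has no infinite Littlestone tree, $\prec$ is well-founded and its rank is defined by transfinite recursion: $\mathrm{rank}(\mathbf t)=0$ if no $\mathbf t'\prec\mathbf t$ exists, else $\mathrm{rank}(\mathbf t)=\sup\{\mathrm{rank}(\mathbf t')+1:\mathbf t'\prec\mathbf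 t\}$. The ordinal Littlestone dimension is $\mathrm{LD}(\mathcal{H})=-1$ if $\mathcal{H}=\varnothing$; $\mathrm{LD}(\mathcal{H})=\mathsf\Omega$ (a symbol larger than every ordinal) if $\mathcal{H}$ has an infinite Littlestone tree; and $\mathrm{LD}(\mathcal{H})=\mathrm{rank}(\varnothing)$ otherwise. $\omega_1$ is the first uncountable ordinal. *)

(* Defs.v *)
From Stdlib Require Import Reals List.
Open Scope R_scope.

Definition I01 : Type := { x : R | 0 <= x <= 1 }.

Definition countable_pred {T : Type} (A : T -> Prop) : Prop :=
  exists f : nat -> T, forall x, A x -> exists n : nat, f n = x.

(** Continuum hypothesis: every set of reals is countable or admits an
    injection of R into it (hence, by Schroeder-Bernstein, has the
    cardinality of R). *)
Definition CH : Prop :=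
  forall A : R -> Prop,
    countable_pred A \/
    exists g : R -> R, (forall x y, g x = g y -> x = y) /\ (forall x, A (g x)).

Definition strict_well_order {T : Type} (lt : T -> T -> Prop) : Prop :=
  well_founded lt /\
  (forall x y z, lt x y -> lt y z -> lt x z) /\
  (forall x y, lt x y \/ x = y \/ lt y x).

(** A well-ordering of a type (whose carrier is uncountable, such as [0,1])
    has order type omega_1 iff each proper initial segment is countable. *)
Definition order_type_omega1 {T : Type} (lt : T -> T -> Prop) : Prop :=
  strict_well_order lt /\ forall z : T, countable_pred (fun y => lt y z).

Definition thresholds {T : Type} (lt : T -> T -> Prop) (h : T -> bool) : Prop :=
  exists z : T, forall x : T, h x = true <-> (lt x z \/ x = z).

Section Littlestone.
Context {X : Type}.
Variable H : (X -> bool) -> Prop.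

(** A (finite) Littlestone tree of depth d is given by its node labelling
    [f : list bool -> X]; only the values at lists of length < d matter
    (the node x_u, u in {0,1}^k, k < d, is [f u]). *)
Definition isLTree (d : nat) (f : list bool -> X) : Prop :=
  forall ys : list bool, length ys = d ->
    exists h, H h /\
      forall k : nat, (k < d)%nat -> h (f (firstn k ys)) = nth k ys false.

Definition has_infinite_LTree : Prop :=
  exists f : list bool -> X, forall d : nat, isLTree d f.

Definition LT_prec (d' : nat) (f' : list bool -> X) (d : nat) (f : list bool -> X) : Prop :=
  isLTree d' f' /\ d' = S d /\ forall u : list bool, (length u < d)%nat -> f' u = f u.

(** [rank_ge W ltW d f w] : for a well-order (W, ltW), rank((d,f)) >= the
    order type of the initial segment {v | ltW v w}.  By well-founded
    recursion on w this is characterised by: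
      rank(t) >= beta  iff  for all gamma < beta there is t' prec t with
      rank(t') >= gamma,
    which is equivalent to the transfinite definition
    rank(t) = sup { rank(t') + 1 : t' prec t }. *)
Inductive rank_ge (W : Type) (ltW : W -> W -> Prop) :
    nat -> (list bool -> X) -> W -> Prop :=
| rank_ge_intro : forall d f w,
    (forall v, ltW v w -> exists d' f', LT_prec d' f' d f /\ rank_ge W ltW d' f' v) ->
    rank_ge W ltW d f w.

(** rank(empty tree) >= order type of (W, ltW): for every w there is a
    depth-1 Littlestone tree (the trees t' prec empty tree) of rank >= the
    order type of {v | ltW v w}. *)
Definition rank_empty_ge (W : Type) (ltW : W -> W -> Prop) : Prop :=
  forall w : W, exists f' : list bool -> X, isLTree 1 f' /\ rank_ge W ltW 1 f' w.

(** LD(H) >= omega_1 : either LD(H) = Omega (an infinite Littlestone tree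
    exists), or there is none and rank(empty tree) >= alpha for every
    countable ordinal alpha, presented as a countable well-order. *)
Definition LD_ge_omega1 : Prop :=
  has_infinite_LTree \/
  (~ has_infinite_LTree /\
   forall (W : Type) (ltW : W -> W -> Prop),
     (exists e : nat -> W, forall w, exists n, e n = w) ->
     strict_well_order ltW ->
     rank_empty_ge W ltW).
End Littlestone.

(* Main.v *)
Require Import Defs.
From Stdlib Require Import Reals List Lra Arith Lia Cantor.
From Stdlib Require Import Classical ClassicalEpsilon.
Open Scope R_scope.

Fixpoint nest (s : nat -> R) (n : nat) : R * R :=
  match n with
  | O => (0, 1)
  | S m => let p := nest s m in
           let a := fst p in let b := snd p in
           let d := (b - a) / 3 in
           if Rlt_le_dec (s m) (b - d) then (b - d, b) else (a, a + d)
  end.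

Lemma nest_prop s n :
  fst (nest s n) < snd (nest s n) /\
  fst (nest s n) <= fst (nest s (S n)) /\ snd (nest s (S n)) <= snd (nest s n) /\
  (s n < fst (nest s (S n)) \/ snd (nest s (S n)) < s n).
Proof.
  induction n as [|n IH].
  - simpl. destruct (Rlt_le_dec (s 0%nat) (1 - (1 - 0) / 3)); simpl; lra.
  - destruct IH as [H1 [H2 [H3 H4]]].
    assert (Hlt : fst (nest s (S n)) < snd (nest s (S n))).
    { simpl. destruct (Rlt_le_dec (s n) (snd (nest s n) - (snd (nest s n) - fst (nest s n)) / 3)); simpl; lra. }
    split; [exact Hlt|].
    remember (S n) as m. simpl.
    destruct (Rlt_le_dec (s m) (snd (nest s m) - (snd (nest s m) - fst (nest s m)) / 3)); simpl; lra.
Qed.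

Lemma nest_mono s n k :
  fst (nest s n) <= fst (nest s (n + k)) /\ snd (nest s (n + k)) <= snd (nest s n).
Proof.
  induction k as [|k IH].
  - rewrite Nat.add_0_r; lra.
  - rewrite Nat.add_succ_r. destruct (nest_prop s (n + k)) as [_ [A [B _]]]. lra.
Qed.

Lemma nest_ab s m n : fst (nest s m) <= snd (nest s n).
Proof.
  destruct (nest_mono s m n) as [A _]. destruct (nest_mono s n m) as [_ B].
  destruct (nest_prop s (m + n)) as [C _]. rewrite Nat.add_comm in B. lra.
Qed.

Lemma unit_uncountable (s : nat -> R) : exists x, 0 <= x <= 1 /\ forall n, s n <> x.
Proof.
  set (E := fun x => exists n, x = fst (nest s n)).
  assert (Hb : bound E). { exists 1. intros x [n ->]. apply (nest_ab s n 0). }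
  assert (He : exists x, E x). { exists 0. exists 0%nat. reflexivity. }
  destruct (completeness E Hb He) as [x [Hub Hlub]].
  assert (Hlo : forall n, fst (nest s n) <= x). { intros n. apply Hub. exists n. reflexivity. }
  assert (Hhi : forall n, x <= snd (nest s n)).
  { intros n. apply Hlub. intros y [m ->]. apply nest_ab. }
  exists x. split.
  - split. apply (Hlo 0%nat). apply (Hhi 0%nat).
  - intros n Heq. destruct (nest_prop s n) as [_ [_ [_ H]]].
    specialize (Hlo (S n)). specialize (Hhi (S n)). lra.
Qed.

Lemma I01_uncountable (g : nat -> I01) : exists y : I01, forall n, g n <> y.
Proof.
  destruct (unit_uncountable (fun n => proj1_sig (g n))) as [x [Hx Hn]].
  exists (exist _ x Hx). intros n Heq. apply (Hn n). rewrite Heq. reflexivity.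
Qed.

Definition leo (lt : I01 -> I01 -> Prop) x z := lt x z \/ x = z.

Lemma wf_irrefl {T} (r : T -> T -> Prop) : well_founded r -> forall x, ~ r x x.
Proof.
  intros Hwf x. induction x as [x IH] using (well_founded_ind Hwf).
  intros Hxx. exact (IH x Hxx Hxx).
Qed.

Lemma bound_exists (lt : I01 -> I01 -> Prop) :
  strict_well_order lt -> (forall z, countable_pred (fun y => lt y z)) ->
  forall s : nat -> I01, exists b, forall n, lt (s n) b.
Proof.
  intros [Hwf [Htr Htri]] Hcnt s.
  set (E := fun n => proj1_sig (constructive_indefinite_description _ (Hcnt (s n)))).
  assert (HE : forall n y, lt y (s n) -> exists m, E n m = y).
  { intros n. unfold E. destruct (constructive_indefinite_description _ (Hcnt (s n))) as [h Hh].
    simpl. exact Hh. }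
  set (c := fun k => match of_nat k with (n, O) => s n | (n, S m) => E n m end).
  destruct (I01_uncountable c) as [y Hy].
  exists y. intros n.
  destruct (Htri (s n) y) as [H|[H|H]]; [exact H| |].
  - exfalso. apply (Hy (to_nat (n, O))). unfold c. rewrite cancel_of_to. exact H.
  - exfalso. destruct (HE n y H) as [m Hm]. apply (Hy (to_nat (n, S m))).
    unfold c. rewrite cancel_of_to. exact Hm.
Qed.

Definition hz (lt : I01 -> I01 -> Prop) (z x : I01) : bool :=
  if excluded_middle_informative (lt x z \/ x = z) then true else false.

Lemma hz_true lt z x : hz lt z x = true <-> leo lt x z.
Proof. unfold hz, leo. destruct (excluded_middle_informative _); split; intros; tauto || discriminate. Qed.

Lemma hz_false lt z x : hz lt z x = false <-> ~ leo lt x z.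
Proof. unfold hz, leo. destruct (excluded_middle_informative _); split; intros; tauto || discriminate. Qed.

Lemma hz_thr lt z : thresholds lt (hz lt z).
Proof. exists z. intros x. apply hz_true. Qed.

Inductive Good (lt : I01 -> I01 -> Prop) (W : Type) (ltW : W -> W -> Prop) :
  (I01 -> Prop) -> W -> Prop :=
| Good_intro : forall V w, (exists z, V z) ->
    (forall v, ltW v w -> exists x,
        Good lt W ltW (fun z => V z /\ hz lt z x = true) v /\
        Good lt W ltW (fun z => V z /\ hz lt z x = false) v) ->
    Good lt W ltW V w.

Lemma Good_ne lt W ltW V w : Good lt W ltW V w -> exists z, V z.
Proof. intros H; inversion H; assumption. Qed.

Lemma Good_mono lt W ltW : forall V w, Good lt W ltW V w ->
  forall V' : I01 -> Prop, (forall z, V z -> V' z) -> Good lt W ltW V' w.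
Proof.
  fix IH 3. intros V w H V' Hsub. destruct H as [V w Hne Hs].
  constructor.
  - destruct Hne as [z Hz]. exists z. auto.
  - intros v Hv. destruct (Hs v Hv) as [x [H1 H2]]. exists x. split.
    + apply (IH _ _ H1). intros z [A B]. auto.
    + apply (IH _ _ H2). intros z [A B]. auto.
Qed.

Definition Vt (lt : I01 -> I01 -> Prop) (d : nat) (f : list bool -> I01) (ys : list bool) (z : I01) :=
  forall k, (k < d)%nat -> hz lt z (f (firstn k ys)) = nth k ys false.

Lemma good_isLTree lt W ltW d f w :
  (forall ys, length ys = d -> Good lt W ltW (Vt lt d f ys) w) ->
  isLTree (thresholds lt) d f.
Proof.
  intros HG ys Hl. destruct (Good_ne _ _ _ _ _ (HG ys Hl)) as [z Hz].
  exists (hz lt z). split; [apply hz_thr|]. exact Hz.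
Qed.

Definition pt0 : I01 := exist _ 0 (conj (Rle_refl 0) Rle_0_1).

Lemma tree_rank lt W ltW (Hwf : well_founded ltW) : forall w d f,
  (forall ys, length ys = d -> Good lt W ltW (Vt lt d f ys) w) ->
  rank_ge (thresholds lt) W ltW d f w.
Proof.
  intros w. induction w as [w IH] using (well_founded_ind Hwf).
  intros d f HG. constructor. intros v Hv.
  assert (Hc : forall ys, exists x, length ys = d ->
     Good lt W ltW (fun z => Vt lt d f ys z /\ hz lt z x = true) v /\
     Good lt W ltW (fun z => Vt lt d f ys z /\ hz lt z x = false) v).
  { intros ys. destruct (Nat.eq_dec (length ys) d) as [e|ne].
    - pose proof (HG ys e) as Hg. inversion Hg as [V w' Hne Hs]; subst.
      destruct (Hs v Hv) as [x Hx]. exists x. intros _. exact Hx.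
    - exists pt0. intros e. contradiction. }
  set (g := fun ys => proj1_sig (constructive_indefinite_description _ (Hc ys))).
  assert (Hg : forall ys, length ys = d ->
     Good lt W ltW (fun z => Vt lt d f ys z /\ hz lt z (g ys) = true) v /\
     Good lt W ltW (fun z => Vt lt d f ys z /\ hz lt z (g ys) = false) v).
  { intros ys. unfold g. destruct (constructive_indefinite_description _ (Hc ys)) as [x Hx].
    exact Hx. }
  set (f' := fun u => if Nat.ltb (length u) d then f u else g u).
  assert (HG' : forall ys', length ys' = S d -> Good lt W ltW (Vt lt (S d) f' ys') v).
  { intros ys' Hl.
    assert (Hne : ys' <> nil). { intros ->. discriminate. }
    destruct (exists_last Hne) as [ys [b ->]].
    rewrite length_app in Hl. simpl in Hl.
    assert (Hlen : length ys = d) by lia.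
    assert (Hgood : Good lt W ltW (fun z => Vt lt d f ys z /\ hz lt z (g ys) = b) v).
    { destruct b; [apply (proj1 (Hg ys Hlen)) | apply (proj2 (Hg ys Hlen))]. }
    apply (Good_mono _ _ _ _ _ Hgood). intros z [HV Hb] k Hk.
    rewrite firstn_app.
    destruct (Nat.lt_ge_cases k d) as [Hkd|Hkd].
    - replace (k - length ys)%nat with O by lia. simpl. rewrite app_nil_r.
      rewrite app_nth1 by lia. unfold f'.
      rewrite length_firstn.
      replace (Nat.ltb (Nat.min k (length ys)) d) with true
        by (symmetry; apply Nat.ltb_lt; lia).
      apply HV. exact Hkd.
    - assert (k = d) by lia. subst k.
      replace (length ys - length ys)%nat with O by lia.
      rewrite <- Hlen. rewrite firstn_all, Nat.sub_diag. simpl. rewrite app_nil_r.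
      rewrite app_nth2 by lia. rewrite Nat.sub_diag. simpl.
      unfold f'. rewrite Hlen, Nat.ltb_irrefl. exact Hb. }
  exists (S d), f'. split.
  - split; [exact (good_isLTree _ _ _ _ _ _ HG')|]. split; [reflexivity|].
    intros u Hu. unfold f'. replace (Nat.ltb (length u) d) with true
      by (symmetry; apply Nat.ltb_lt; lia). reflexivity.
  - apply IH; assumption.
Qed.

Lemma lemma_B lt W ltW :
  strict_well_order lt -> (forall z, countable_pred (fun y => lt y z)) ->
  (exists e : nat -> W, forall w, exists n, e n = w) -> well_founded ltW ->
  forall v a, exists b, Good lt W ltW (fun z => leo lt a z /\ lt z b) v.
Proof.
  intros Hwo Hcnt [e He] Hwf.
  pose proof Hwo as [Hlwf [Htr Htri]].
  assert (Hirr := wf_irrefl lt Hlwf).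
  intros v. induction v as [v IH] using (well_founded_ind Hwf). intros a.
  assert (Hc : forall u, exists p : I01 * I01, ltW u v ->
    Good lt W ltW (fun z => leo lt a z /\ lt z (fst p)) u /\
    Good lt W ltW (fun z => leo lt (fst p) z /\ lt z (snd p)) u).
  { intros u. destruct (classic (ltW u v)) as [Hu|Hu].
    - destruct (IH u Hu a) as [b1 Hb1]. destruct (IH u Hu b1) as [b2 Hb2].
      exists (b1, b2). intros _. split; assumption.
    - exists (a, a). intros H; contradiction. }
  set (P := fun u => proj1_sig (constructive_indefinite_description _ (Hc u))).
  assert (HP : forall u, ltW u v ->
    Good lt W ltW (fun z => leo lt a z /\ lt z (fst (P u))) u /\
    Good lt W ltW (fun z => leo lt (fst (P u)) z /\ lt z (snd (P u))) u).
  { intros u. unfold P. destruct (constructive_indefinite_description _ (Hc u)) as [p Hp].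
    exact Hp. }
  destruct (bound_exists lt Hwo Hcnt
     (fun n => match n with O => a | S m => snd (P (e m)) end)) as [b Hb].
  exists b. constructor.
  - exists a. split; [right; reflexivity|]. exact (Hb O).
  - intros u Hu. destruct (He u) as [n Hn].
    assert (HbP : lt (snd (P u)) b). { rewrite <- Hn. exact (Hb (S n)). }
    destruct (HP u Hu) as [G1 G2].
    assert (Hax : lt a (fst (P u))).
    { destruct (Good_ne _ _ _ _ _ G1) as [z1 [[Hz1|Hz1] Hz1']]; [eauto|subst z1; exact Hz1']. }
    assert (Hxy : lt (fst (P u)) (snd (P u))).
    { destruct (Good_ne _ _ _ _ _ G2) as [z2 [[Hz2|Hz2] Hz2']]; [eauto|subst z2; exact Hz2']. }
    exists (fst (P u)). split.
    + apply (Good_mono _ _ _ _ _ G2). intros z [Hxz Hzy]. split; [split|].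
      * left. destruct Hxz as [Hxz| <-]; eauto.
      * eauto.
      * apply hz_true. exact Hxz.
    + apply (Good_mono _ _ _ _ _ G1). intros z [Haz Hzx]. split; [split|].
      * exact Haz.
      * eauto.
      * apply hz_false. intros [H| <-]; eapply Hirr; eauto.
Qed.

Lemma lemma_A lt W ltW :
  strict_well_order lt -> (forall z, countable_pred (fun y => lt y z)) ->
  (exists e : nat -> W, forall w, exists n, e n = w) -> well_founded ltW ->
  forall w a, Good lt W ltW (fun z => leo lt a z) w.
Proof.
  intros Hwo Hcnt He Hwf.
  pose proof Hwo as [Hlwf [Htr Htri]].
  assert (Hirr := wf_irrefl lt Hlwf).
  intros w. induction w as [w IH] using (well_founded_ind Hwf). intros a.
  constructor.
  - exists a. right. reflexivity.
  - intros v Hv. destruct (lemma_B lt W ltW Hwo Hcnt He Hwf v a) as [b Hb].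
    assert (Hab : lt a b).
    { destruct (Good_ne _ _ _ _ _ Hb) as [z1 [[Hz1|Hz1] Hz1']]; [eauto|subst z1; exact Hz1']. }
    exists b. split.
    + apply (Good_mono _ _ _ _ _ (IH v Hv b)). intros z Hbz. split.
      * left. destruct Hbz as [Hbz| <-]; eauto.
      * apply hz_true. exact Hbz.
    + apply (Good_mono _ _ _ _ _ Hb). intros z [Haz Hzb]. split; [exact Haz|].
      apply hz_false. intros [H| <-]; eapply Hirr; eauto.
Qed.

Theorem mainTheorem19 :
  CH ->
  forall lt : I01 -> I01 -> Prop,
    order_type_omega1 lt ->
    LD_ge_omega1 (thresholds lt).
Proof.
  intros _ lt [Hwo Hcnt]. unfold LD_ge_omega1.
  destruct (classic (has_infinite_LTree (thresholds lt))) as [Hi|Hi]; [left; exact Hi|].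
  right. split; [exact Hi|].
  intros W ltW He [Hwf _] w.
  destruct (lemma_B lt W ltW Hwo Hcnt He Hwf w pt0) as [b Hb].
  set (f' := fun _ : list bool => b).
  assert (HG : forall ys, length ys = 1%nat -> Good lt W ltW (Vt lt 1 f' ys) w).
  { intros ys Hl. destruct ys as [|c [|c' ys]]; try discriminate.
    destruct c.
    - apply (Good_mono _ _ _ _ _ (lemma_A lt W ltW Hwo Hcnt He Hwf w b)).
      intros z Hbz k Hk. assert (k = O) by lia. subst k. simpl.
      apply hz_true. exact Hbz.
    - apply (Good_mono _ _ _ _ _ Hb). intros z [_ Hzb] k Hk.
      assert (k = O) by lia. subst k. simpl.
      destruct Hwo as [Hlwf [Htr _]].
      apply hz_false. intros [H| <-]; eapply (wf_irrefl lt Hlwf); eauto. }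
  exists f'. split.
  - exact (good_isLTree _ _ _ _ _ _ HG).
  - exact (tree_rank lt W ltW Hwf w 1 f' HG).
Qed.
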